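(* Let $G=(V,E)$ be a transitive and finite directed graph with in-degree at least $2$ at every vertex, let $v\in V$ have in-degree at least $3$, and let $\widehat{G}_v$ be the $v$-lag of $G$. Then the map $\theta$ is a bijection between the set $E^\bullet$ of finite paths of $G$ and the set of finite paths in $\widehat{G}_v$ whose range and source both lie in $V$.
   Context: A directed graph $G=(V,E,r,s)$; in-degree of $v$ is $|r^{-1}(v)|$. $E^\bullet$ denotes the finite paths $\lambda=e_1\cdots e_n$ ($s(e_i)=r(e_{i+1})$), vertices counting as paths of length $0$; ''an edge from $u$ to $w$'' has source $u$, range $w$; $G$ is transitive if there is a path between any two vertices. The $v$-lag $\widehat{G}_v$ at a vertex $v$ of in-degree $d_v\ge3$: enumerate edges with range $v$ as $e_0,\dots,e_{d_v-1}$ with sources $u_0,\dots,u_{d_v-1}$; keep all vertices and all edges not ranging in $v$; add vertices $v_1,\dots,v_{d_v-2}$, an edge $f_1$ from $v_1$ to $v$ and edges $f_i$ from $v_i$ to $v_{i-1}$ ($2\le i\le d_v-2$); replace $e_0$ by $\hat e_0$ from $u_0$ to $v$, $e_j$ by $\hat e_j$ from $u_j$ to $v_j$ ($1\le j\le d_v-2$), and $e_{d_v-1}$ by $\hat e_{d_v-1}$ from $u_{d_v-1}$ to $v_{d_v-2}$. The map $\theta$: $\theta(u)=u$ for $u\in V$ (via $V\subseteq\widehat{V}_v$), $\theta(e)=e$ for $e\in E$ with $r(e)\neq v$, $\theta(e_j)=f_1f_2\cdots f_j\hat e_j$ for $0\le j\le d_v-1$, where for $j=d_v-1$ this means $f_1\cdots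 f_{d_v-2}\hat e_{d_v-1}$ and for $j=0$ just $\hat e_0$; extended to paths by concatenation. *)

(* Defs.v *)
From mathcomp Require Import all_boot.
Set Implicit Arguments. Unset Strict Implicit. Unset Printing Implicit Defensive.

(* A finite path is either a vertex (length 0, encoded [inl u]) or a nonempty
   edge sequence e1 ... en (encoded [inr (e1, [:: e2; ...; en])]) with
   s(e_i) = r(e_{i+1}). *)
Definition gpath (V E : Type) := (V + (E * seq E))%type.

Definition is_path (V : eqType) (E : Type) (r s : E -> V) (p : gpath V E) : bool :=
  match p with
  | inl _ => true
  | inr (e, es) => sorted (fun a b => s a == r b) (e :: es)
  end.

Definition prange (V E : Type) (r s : E -> V) (p : gpath V E) : V :=
  match p with inl u => u | inr (e, _) => r e end.

Definition psource (V E : Type) (r s : E -> V) (p : gpath V E) : V :=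
  match p with inl u => u | inr (e, es) => s (last e es) end.

Definition indeg (V E : finType) (r : E -> V) (u : V) : nat := #|[set e | r e == u]|.

Definition transitive_graph (V E : finType) (r s : E -> V) : Prop :=
  forall u w : V, exists p : gpath V E, [/\ is_path r s p, prange r s p = u & psource r s p = w].

(* ---------- the v-lag ----------
   en : 'I_d -> E enumerates the edges e_0, ..., e_{d-1} with range v.
   New vertices v_1..v_{d-2} are [inr k] with k : 'I_(d-2) standing for v_{k+1};
   vertex type is V + 'I_(d-2).
   Edges: [inl e] stands for e itself (if r e <> v) or for \hat e_j (if e = e_j);
   [inr k] stands for f_{k+1}. *)
Section Lag.
Variables (V E : finType) (r s : E -> V) (v : V) (d : nat) (en : 'I_d -> E).

Definition lag_idx (e : E) : nat := index e [seq en j | j <- enum 'I_d].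

(* v_{min(j, d-2)}, with v_0 := v *)
Definition lag_vj (j : nat) : (V + 'I_(d - 2))%type :=
  if j == 0 then inl v
  else match @insub nat (fun n => n < d - 2) 'I_(d - 2) (minn j (d - 2)).-1 with
       | Some k => inr k
       | None => inl v
       end.

Definition lag_r (x : (E + 'I_(d - 2))%type) : (V + 'I_(d - 2))%type :=
  match x with
  | inl e => if r e == v then lag_vj (lag_idx e) else inl (r e)
  | inr k => lag_vj k          (* f_{k+1} ranges in v_k *)
  end.

Definition lag_s (x : (E + 'I_(d - 2))%type) : (V + 'I_(d - 2))%type :=
  match x with
  | inl e => inl (s e)
  | inr k => inr k             (* f_{k+1} has source v_{k+1} *)
  end.

(* theta(e) = e if r e <> v; theta(e_j) = f_1 ... f_{min(j,d-2)} \hat e_j *)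
Definition theta_e (e : E) : seq (E + 'I_(d - 2))%type :=
  if r e == v then
    map (fun k : 'I_(d - 2) => (inr k : (E + 'I_(d - 2))%type))
        (filter (fun k : 'I_(d - 2) => k < lag_idx e) (enum 'I_(d - 2)))
      ++ [:: inl e]
  else [:: inl e].

Definition theta (p : gpath V E) : gpath (V + 'I_(d - 2)) (E + 'I_(d - 2)) :=
  match p with
  | inl u => inl (inl u)
  | inr (e, es) =>
      match flatten [seq theta_e x | x <- e :: es] with
      | x :: xs => inr (x, xs)
      | [::] => inl (inl v)  (* unreachable: theta_e is never empty *)
      end
  end.

End Lag.

Definition in_V (V : Type) (n : nat) (x : (V + 'I_n)%type) : bool :=
  if x is inl _ then true else false.

(* Main.v *)
Require Import Defs.
From mathcomp Require Import all_boot.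
From mathcomp Require Import zify.
Set Implicit Arguments. Unset Strict Implicit. Unset Printing Implicit Defensive.

Lemma iota_filter n m : n <= m -> filter (fun i => i < n) (iota 0 m) = iota 0 n.
Proof.
move=> le; rewrite -(subnKC le) iotaD filter_cat add0n.
rewrite (@eq_in_filter _ _ predT) ?filter_predT; last first.
  by move=> i; rewrite mem_iota add0n => /andP[_ ->].
rewrite (@eq_in_filter _ _ pred0) ?filter_pred0 ?cats0 //.
by move=> i; rewrite mem_iota => /andP[h _]; rewrite /= ltnNge h.
Qed.

Lemma sorted_rcons2 (T : Type) (R : rel T) s a b :
  sorted R (rcons s a) -> R a b -> sorted R (rcons (rcons s a) b).
Proof.
case: s => [|x s] /=; first by move=> _ ->.
by rewrite !rcons_path last_rcons => -> ->.
Qed.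

Lemma sorted_cat_rcons (T : Type) (R : rel T) s a b t :
  sorted R (rcons s a ++ b :: t) = [&& sorted R (rcons s a), R a b & sorted R (b :: t)].
Proof.
case: s => [|x s] /=; first by [].
by rewrite cat_path last_rcons /=.
Qed.

Section H.
Variables (V E : finType) (r s : E -> V) (v : V) (d : nat) (en : 'I_d -> E).
Local Notation T := (E + 'I_(d-2))%type.
Local Notation W := (V + 'I_(d-2))%type.
Local Notation Rr := (lag_r r v en).
Local Notation Ss := (lag_s s (d:=d)).
Local Notation vj := (lag_vj v d).
Definition RR (a b : T) := Ss a == Rr b.

Definition F (n : nat) : seq T :=
  map (fun k : 'I_(d-2) => (inr k : T)) (filter (fun k : 'I_(d-2) => k < n) (enum 'I_(d-2))).
Definition pre (w : W) : seq T := if w is inr k then F k.+1 else [::].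
Definition getl (x : T) : option E := if x is inl e then Some e else None.
Definition decode (q : seq T) := pmap getl q.
Definition thf (p : seq E) := flatten (map (theta_e r v en) p).

Lemma F_val n : map val (filter (fun k : 'I_(d-2) => k < n) (enum 'I_(d-2)))
  = filter (fun i => i < n) (iota 0 (d-2)).
Proof. by rewrite -val_enum_ord filter_map. Qed.

Lemma Fs (k : 'I_(d-2)) : F k.+1 = rcons (F k) (inr k).
Proof.
rewrite /F -map_rcons; congr map; apply: (inj_map val_inj).
rewrite map_rcons !F_val !iota_filter ?(ltnW (ltn_ord k)) ?ltn_ord //.
by rewrite -cats1 -addn1 iotaD.
Qed.

Lemma F0 : F 0 = [::].
Proof. by rewrite /F; elim: (enum _) => //= x l; rewrite ltn0. Qed.

Lemma pre_vj j : pre (vj j) = F j.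
Proof.
rewrite /lag_vj; case: eqP => [->|/eqP j0]; first by rewrite F0.
case: insubP => [k _ kv|hn] /=.
  rewrite /F; congr map; apply: eq_filter => i /=.
  have := ltn_ord i; have := ltn_ord k; rewrite kv => h1 h2.
  by apply/idP/idP => ?; lia.
have e0 : enum 'I_(d-2) = [::] by apply: size0nil; rewrite size_enum_ord; lia.
by rewrite /F e0.
Qed.

Lemma vjS k (H : k < d-2) : vj k.+1 = inr (Ordinal H).
Proof.
rewrite /lag_vj /=; case: insubP => [k' _ kv|hn].
  by congr inr; apply: val_inj => /=; rewrite kv; lia.
exfalso; move/negP: hn; apply; lia.
Qed.

Lemma vj_inl j u : vj j = inl u -> u = v.
Proof.
rewrite /lag_vj; case: eqP => _; first by case.
case: insubP => [k _ _|_] H; first by []. by case: H.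
Qed.

Lemma pre_sorted_inr k (H : k < d-2) y :
  Rr y = inr (Ordinal H) -> sorted RR (rcons (F k.+1) y).
Proof.
elim: k H y => [|k IH] H y Hy.
  by rewrite (Fs (Ordinal H)) F0 /= /RR Hy.
rewrite (Fs (Ordinal H)); apply: sorted_rcons2; last by rewrite /RR Hy.
by apply: (IH (ltnW H)); exact: (vjS (ltnW H)).
Qed.

Lemma pre_sorted w y : Rr y = w -> sorted RR (rcons (pre w) y).
Proof.
case: w => [u|k] Hy //=.
by apply: (@pre_sorted_inr k (ltn_ord k)); rewrite Hy; congr inr; apply: val_inj.
Qed.

Lemma pre_head w y : Rr y = w ->
  Rr (head y (rcons (pre w) y)) = if w is inl u then inl u else inl v.
Proof.
case: w => [u|k] Hy //=.
have := F_val k.+1; rewrite iota_filter ?ltn_ord //.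
rewrite /F; case: (filter _ _) => [|i L] //= [i0 _].
by rewrite /lag_r i0.
Qed.

Lemma theta_eE e : theta_e r v en e = rcons (pre (Rr (inl e))) (inl e).
Proof.
rewrite /theta_e /lag_r; case: ifP => _; last by [].
by rewrite pre_vj -cats1.
Qed.

Lemma Rr_inl_head e :
  (match Rr (inl e) with inl u => inl u | inr _ => inl v end : W) = inl (r e).
Proof.
rewrite /lag_r; case: eqP => [Hv|//].
case E2: (lag_vj v d _) => [u|k] //; last by rewrite Hv.
by rewrite (vj_inl E2) Hv.
Qed.

Lemma theta_e_props e : exists x t, [/\ theta_e r v en e = x :: t,
  sorted RR (x :: t), Rr x = inl (r e) & last x t = inl e].
Proof.
rewrite theta_eE.
have Hs := pre_sorted (erefl (Rr (inl e))).
have Hh := pre_head (erefl (Rr (inl e))).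
case E1: (rcons _ _) Hs Hh => [|x t]; first by case: (pre _) E1.
move=> Hs Hh; exists x, t; split => //.
  rewrite (Hh : Rr x = _); exact: Rr_inl_head.
by have := last_rcons x (pre (Rr (inl e))) (inl e); rewrite E1 /=.
Qed.

Lemma thf_cons e es : thf (e :: es) = theta_e r v en e ++ thf es.
Proof. by []. Qed.

Lemma thf_nonempty e es : exists x t, thf (e :: es) = x :: t /\ Rr x = inl (r e).
Proof.
have [x [t [E1 _ Hr _]]] := theta_e_props e.
by exists x, (t ++ thf es); rewrite thf_cons E1.
Qed.

Lemma thf_last e es y : last y (thf (e :: es)) = inl (last e es).
Proof.
elim: es e y => [|e' es IH] e y.
  by rewrite thf_cons /= cats0 theta_eE last_rcons.
by rewrite thf_cons last_cat IH.
Qed.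

Lemma thf_sorted e es :
  sorted RR (thf (e :: es)) = sorted (fun a b => s a == r b) (e :: es).
Proof.
elim: es e => [|e' es IH] e.
  have [x [t [E1 Hs _ _]]] := theta_e_props e.
  by rewrite thf_cons /= cats0 E1 Hs.
have [x [t [E1 Hx]]] := thf_nonempty e' es.
rewrite thf_cons theta_eE E1 sorted_cat_rcons -E1 IH -theta_eE.
have [x' [t' [E1' Hs' _ _]]] := theta_e_props e.
rewrite E1' Hs' /RR Hx /=.
by congr andb; apply/eqP/eqP => [[]|->].
Qed.

Lemma decode_pre w : decode (pre w) = [::].
Proof. by case: w => //= k; rewrite /F; elim: (filter _ _). Qed.

Lemma decode_thf p : decode (thf p) = p.
Proof.
elim: p => [|e p IH] //.
have := decode_pre (Rr (inl e)); rewrite /decode in IH * => H.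
by rewrite thf_cons pmap_cat IH theta_eE -cats1 pmap_cat H.
Qed.

Lemma main_surj x xs : sorted RR (x :: xs) -> in_V (Ss (last x xs)) ->
  thf (decode (x :: xs)) = pre (Rr x) ++ x :: xs.
Proof.
elim: xs x => [|y ys IH] x.
  case: x => [e|k] //= _ _.
  by rewrite thf_cons cats0 theta_eE -cats1.
move=> /andP[Rxy Hs] Hv.
have IH' := IH y Hs Hv.
case: x Rxy Hv => [e|k] Rxy Hv.
  have -> : decode [:: inl e, y & ys] = e :: decode (y :: ys) by [].
  rewrite thf_cons IH' theta_eE -(eqP Rxy).
  by rewrite cat_rcons.
have -> : decode [:: inr k, y & ys] = decode (y :: ys) by [].
rewrite IH' -(eqP Rxy).
rewrite (_ : pre (Ss (inr k)) = rcons (F k) (inr k)); last exact: Fs.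
rewrite (_ : pre (Rr (inr k)) = F k); last exact: pre_vj.
by rewrite cat_rcons.
Qed.

Lemma theta_inr e es : theta r v en (inr (e, es)) =
  match thf (e :: es) with x :: xs => inr (x, xs) | [::] => inl (inl v) end.
Proof. by []. Qed.

End H.

Theorem lemma3p7 (V E : finType) (r s : E -> V) (v : V) (d : nat) (en : 'I_d -> E) :
  transitive_graph r s ->
  (forall u : V, 2 <= indeg r u) ->
  3 <= indeg r v ->
  injective en ->
  (forall e : E, r e = v <-> exists j : 'I_d, en j = e) ->
  let Ghat_r := lag_r r v en in
  let Ghat_s := lag_s s (d := d) in
  let th := theta r v en in
  [/\ (forall p : gpath V E, is_path r s p ->
         [/\ is_path Ghat_r Ghat_s (th p),
             in_V (prange Ghat_r Ghat_s (th p)) &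
             in_V (psource Ghat_r Ghat_s (th p))]),
      {in [pred p | is_path r s p] &, injective th} &
      (forall q, is_path Ghat_r Ghat_s q ->
         in_V (prange Ghat_r Ghat_s q) -> in_V (psource Ghat_r Ghat_s q) ->
         exists2 p, is_path r s p & th p = q)].
Proof.
move=> _ _ _ _ _; cbv zeta; split.
- case=> [u|[e es]] Hp; first by [].
  have [x [t [Et Rx]]] := thf_nonempty r s v en e es.
  have Hl := thf_last r v en e es x.
  rewrite theta_inr Et /=; split.
  + by have H := thf_sorted r s v en e es; rewrite Et in H; exact: (etrans H Hp).
  + by rewrite Rx.
  + by rewrite Et /= in Hl; rewrite Hl.
- move=> [u1|[e1 es1]] [u2|[e2 es2]] _ _.
  + by case=> ->.
  + have [x [t [Et _]]] := thf_nonempty r s v en e2 es2.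
    by rewrite theta_inr Et.
  + have [x [t [Et _]]] := thf_nonempty r s v en e1 es1.
    by rewrite theta_inr Et.
  + have [x1 [t1 [Et1 _]]] := thf_nonempty r s v en e1 es1.
    have [x2 [t2 [Et2 _]]] := thf_nonempty r s v en e2 es2.
    rewrite !theta_inr Et1 Et2 => -[H1 H2].
    have := decode_thf r v en (e1 :: es1); rewrite Et1 H1 H2 -Et2 decode_thf.
    by case=> -> ->.
- case=> [[u|k]|[x xs]] //.
    by move=> *; exists (inl u).
  move=> Hp Hr Hs.
  have M := main_surj Hp Hs.
  case D: (decode (x :: xs)) M => [|e es] M;
    move: Hr M => /=; case: (lag_r r v en x) => [u|k] // _ /= M.
  exists (inr (e, es)).
    by have H := thf_sorted r s v en e es; rewrite M in H; exact: (etrans (esym H) Hp).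
  by rewrite theta_inr M.
Qed.
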